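(* Let $\mathscr E$ be a category with pullbacks and let $(\mathscr L,\mathscr R)$ be a compatible pair of protocalibrations of $\mathscr E$. The spans in $\mathscr E$ whose left leg is invertible and whose right leg is in $\mathscr R$ are morphisms of ${}_{\mathscr L}\mathrm{Spn}\,\mathscr E$, and as such they form a protocalibration $\mathscr R_*$ of the bicategory ${}_{\mathscr L}\mathrm{Spn}\,\mathscr E$.
   Context: $\mathscr E$ is regarded as a locally discrete bicategory. A protocalibration of a category with pullbacks is a class of morphisms containing isomorphisms, closed under composition with isomorphisms and composition, and stable under pullback. $\Delta_u$ is pullback along $u$; $u$ is powerful if $\Delta_u$ has a right adjoint $\Pi_u$; $\mathscr P$ = class of powerful morphisms. $(\mathscr L,\mathscr R)$ compatible means $\mathscr L\subseteq\mathscr P\cap\mathscr R$ and $\Pi_rv\in\mathscr R$ for $r\in\mathscr L$, $v\in\mathscr R$. ${}_{\mathscr L}\mathrm{Spn}\,\mathscr E$: objects of $\mathscr E$, morphisms $U\to V$ spans $U\xleftarrow{u}S\xrightarrow{v}V$ with $u\in\mathscr L$, composed by pullback, 2-morphisms $(u,S,v)\Rightarrow(u',S',v')$ isomorphism classes of $f:S'\to S$ with $uf=u'$, $vf=v'$. A protocalibration of a bicategory $\mathscr C$ is a set of morphisms containing all equivalences, closed under isomorphism and composition, such that bicategorical pullbacks of its members along arbitrary morphisms exist and are in it, and whose members $p$ are groupoid opfibrations (each functor $\mathscr C(U,p)$ is a groupoid opfibration: its opposite has all morphisms cartesian and lifts every $\phi:b\to px$ up to an isomorphism $b\cong pz$).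 *)

(* Defs.v *)
Record Cat := mkCat {
  Ob :> Type;
  Hom : Ob -> Ob -> Type;
  idm : forall A, Hom A A;
  cmp : forall A B C, Hom B C -> Hom A B -> Hom A C;
  cmp_assoc : forall A B C D (h : Hom C D) (g : Hom B C) (f : Hom A B),
      cmp A C D h (cmp A B C g f) = cmp A B D (cmp B C D h g) f;
  cmp_idl : forall A B (f : Hom A B), cmp A B B (idm B) f = f;
  cmp_idr : forall A B (f : Hom A B), cmp A A B f (idm A) = f }.
Arguments Hom {c} _ _.
Arguments idm {c} A.
Arguments cmp_assoc {c A B C D} h g f.
Arguments cmp_idl {c A B} f.
Arguments cmp_idr {c A B} f.
Arguments cmp {c A B C} _ _.
Infix "∘" := cmp (at level 40, left associativity).

Definition is_iso {E : Cat} {A B : E} (f : Hom A B) : Prop :=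
  exists g : Hom B A, g ∘ f = idm A /\ f ∘ g = idm B.

Definition is_pullback {E : Cat} {A B C P : E} (u : Hom A C) (v : Hom B C)
    (p1 : Hom P A) (p2 : Hom P B) : Prop :=
  u ∘ p1 = v ∘ p2 /\
  forall (X : E) (a : Hom X A) (b : Hom X B), u ∘ a = v ∘ b ->
    exists h : Hom X P, (p1 ∘ h = a /\ p2 ∘ h = b) /\
      forall h' : Hom X P, p1 ∘ h' = a -> p2 ∘ h' = b -> h' = h.

Record PBCat := mkPBCat {
  pcat :> Cat;
  pb : forall A B C : pcat, Hom A C -> Hom B C -> pcat;
  pb1 : forall (A B C : pcat) (u : Hom A C) (v : Hom B C), Hom (pb A B C u v) A;
  pb2 : forall (A B C : pcat) (u : Hom A C) (v : Hom B C), Hom (pb A B C u v) B;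
  pb_ok : forall (A B C : pcat) (u : Hom A C) (v : Hom B C),
      is_pullback u v (pb1 A B C u v) (pb2 A B C u v) }.
Arguments pb {p A B C} u v.
Arguments pb1 {p A B C} u v.
Arguments pb2 {p A B C} u v.
Arguments pb_ok {p A B C} u v.

Definition morclass (E : Cat) := forall A B : E, Hom A B -> Prop.

Definition protocal {E : PBCat} (M : morclass E) : Prop :=
  (forall (A B : E) (f : Hom A B), is_iso f -> M _ _ f) /\
  (forall (A B C : E) (f : Hom A B) (i : Hom B C), M _ _ f -> is_iso i -> M _ _ (i ∘ f)) /\
  (forall (A B C : E) (i : Hom A B) (f : Hom B C), is_iso i -> M _ _ f -> M _ _ (f ∘ i)) /\
  (forall (A B C : E) (f : Hom A B) (g : Hom B C), M _ _ f -> M _ _ g -> M _ _ (g ∘ f)) /\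
  (forall (A B C P : E) (u : Hom A C) (v : Hom B C) (p1 : Hom P A) (p2 : Hom P B),
      is_pullback u v p1 p2 -> M _ _ u -> M _ _ p2).

(* ---------- powerful morphisms ----------
   For u : U -> V, Delta_u : E/V -> E/U sends (y : Y -> V) to
   (pb1 u y : pb u y -> U), and a map h : z -> y over V to the induced map m.
   [pi_value u x y eps] says that (y, eps : Delta_u y -> x) is a universal
   arrow from Delta_u to x, i.e. y = Pi_u x with counit eps. *)
Definition Delta_map {E : PBCat} {U V Y Z : E} (u : Hom U V) (y : Hom Y V) (z : Hom Z V)
    (h : Hom Z Y) (m : Hom (pb u z) (pb u y)) : Prop :=
  pb1 u y ∘ m = pb1 u z /\ pb2 u y ∘ m = h ∘ pb2 u z.

Definition pi_value {E : PBCat} {U V X Y : E} (u : Hom U V) (x : Hom X U)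
    (y : Hom Y V) (eps : Hom (pb u y) X) : Prop :=
  x ∘ eps = pb1 u y /\
  forall (Z : E) (z : Hom Z V) (g : Hom (pb u z) X), x ∘ g = pb1 u z ->
    exists h : Hom Z Y,
      (y ∘ h = z /\ forall m, Delta_map u y z h m -> eps ∘ m = g) /\
      forall h' : Hom Z Y,
        (y ∘ h' = z /\ forall m, Delta_map u y z h' m -> eps ∘ m = g) -> h' = h.

(* Delta_u has a right adjoint Pi_u *)
Definition powerful {E : PBCat} {U V : E} (u : Hom U V) : Prop :=
  forall (X : E) (x : Hom X U), exists (Y : E) (y : Hom Y V) (eps : Hom (pb u y) X),
    pi_value u x y eps.

Definition compatible {E : PBCat} (L R : morclass E) : Prop :=
  (forall (A B : E) (r : Hom A B), L _ _ r -> powerful r /\ R _ _ r) /\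
  (forall (U V X Y : E) (r : Hom U V) (v : Hom X U) (y : Hom Y V) (eps : Hom (pb r y) X),
      L _ _ r -> R _ _ v -> pi_value r v y eps -> R _ _ y).

Record Span {E : PBCat} (U V : E) := mkSpan { apex : E; sl : Hom apex U; sr : Hom apex V }.
Arguments mkSpan {E U V} apex sl sr.
Arguments apex {E U V} s.
Arguments sl {E U V} s.
Arguments sr {E U V} s.

(* a morphism U -> V of _L Spn E *)
Definition Lspan {E : PBCat} (L : morclass E) {U V : E} (s : Span U V) : Prop :=
  L _ _ (sl s).

Definition scomp {E : PBCat} {U V W : E} (t : Span V W) (s : Span U V) : Span U W :=
  @mkSpan E U W (pb (sr s) (sl t)) (sl s ∘ pb1 (sr s) (sl t)) (sr t ∘ pb2 (sr s) (sl t)).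

Definition sid {E : PBCat} (A : E) : Span A A := @mkSpan E A A A (idm A) (idm A).

(* 2-cells s => t : morphisms f : apex t -> apex s commuting with the legs;
   vertical composite of f : s => t and g : t => w is f ∘ g : s => w *)
Definition cell {E : PBCat} {U V : E} (s t : Span U V) (f : Hom (apex t) (apex s)) : Prop :=
  sl s ∘ f = sl t /\ sr s ∘ f = sr t.

Definition icell {E : PBCat} {U V : E} (s t : Span U V) (f : Hom (apex t) (apex s)) : Prop :=
  cell s t f /\ exists g : Hom (apex s) (apex t),
    cell t s g /\ f ∘ g = idm (apex s) /\ g ∘ f = idm (apex t).

(* whiskering p . f : p.s => p.t of f : s => t (g is the induced map) *)
Definition whr {E : PBCat} {U A C : E} (p : Span A C) (s t : Span U A)
    (f : Hom (apex t) (apex s)) (g : Hom (apex (scomp p t)) (apex (scomp p s))) : Prop :=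
  pb1 (sr s) (sl p) ∘ g = f ∘ pb1 (sr t) (sl p) /\ pb2 (sr s) (sl p) ∘ g = pb2 (sr t) (sl p).

(* whiskering f . h : s.h => t.h of f : s => t *)
Definition whl {E : PBCat} {X P C : E} (s t : Span P C) (h : Span X P)
    (f : Hom (apex t) (apex s)) (g : Hom (apex (scomp t h)) (apex (scomp s h))) : Prop :=
  pb1 (sr h) (sl s) ∘ g = pb1 (sr h) (sl t) /\ pb2 (sr h) (sl s) ∘ g = f ∘ pb2 (sr h) (sl t).

(* associator (x.y).z => x.(y.z) *)
Definition assoc_rel {E : PBCat} {A B C D : E} (x : Span C D) (y : Span B C) (z : Span A B)
    (a : Hom (apex (scomp x (scomp y z))) (apex (scomp (scomp x y) z))) : Prop :=
  pb1 (sr z) (sl (scomp x y)) ∘ a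
    = pb1 (sr z) (sl y) ∘ pb1 (sr (scomp y z)) (sl x) /\
  pb1 (sr y) (sl x) ∘ (pb2 (sr z) (sl (scomp x y)) ∘ a)
    = pb2 (sr z) (sl y) ∘ pb1 (sr (scomp y z)) (sl x) /\
  pb2 (sr y) (sl x) ∘ (pb2 (sr z) (sl (scomp x y)) ∘ a)
    = pb2 (sr (scomp y z)) (sl x).

Definition is_equiv {E : PBCat} (L : morclass E) {A B : E} (e : Span A B) : Prop :=
  Lspan L e /\ exists (e' : Span B A) (a : Hom (apex (sid A)) (apex (scomp e' e)))
                      (b : Hom (apex (sid B)) (apex (scomp e e'))),
    Lspan L e' /\ icell (scomp e' e) (sid A) a /\ icell (scomp e e') (sid B) b.

(* ---------- bicategorical pullbacks ----------
   Square  p . q ==th==> f . g  (p : A -> C, f : B -> C, q : P -> A, g : P -> B).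
   For each X the induced functor
     Phi_X : _LSpn(X,P) -> IsoComma(_LSpn(X,p), _LSpn(X,f))
   sends h to (q.h, g.h, i_h) with
     i_h = assoc_{f,g,h} . (th * h) . assoc_{p,q,h}^{-1} : p.(q.h) => f.(g.h). *)
Definition phi_iso {E : PBCat} {A B C P X : E} (p : Span A C) (f : Span B C)
    (q : Span P A) (g : Span P B) (th : Hom (apex (scomp f g)) (apex (scomp p q)))
    (h : Span X P) (i : Hom (apex (scomp f (scomp g h))) (apex (scomp p (scomp q h)))) : Prop :=
  exists a1 a2 m, assoc_rel p q h a1 /\ assoc_rel f g h a2 /\
    whl (scomp p q) (scomp f g) h th m /\ a1 ∘ i = m ∘ a2.

(* (al, be) is a morphism (a, b, io) -> (a', b', io') of the iso-comma category *)
Definition compat {E : PBCat} {A B C X : E} (p : Span A C) (f : Span B C)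
    (a : Span X A) (b : Span X B) (io : Hom (apex (scomp f b)) (apex (scomp p a)))
    (a' : Span X A) (b' : Span X B) (io' : Hom (apex (scomp f b')) (apex (scomp p a')))
    (al : Hom (apex a') (apex a)) (be : Hom (apex b') (apex b)) : Prop :=
  exists ma mb, whr p a a' al ma /\ whr f b b' be mb /\ io ∘ mb = ma ∘ io'.

Definition is_bipb {E : PBCat} (L : morclass E) {A B C P : E} (p : Span A C) (f : Span B C)
    (q : Span P A) (g : Span P B) (th : Hom (apex (scomp f g)) (apex (scomp p q))) : Prop :=
  Lspan L q /\ Lspan L g /\ icell (scomp p q) (scomp f g) th /\
  forall X : E,
    (* Phi_X fully faithful *)
    (forall (h h' : Span X P)
            (i : Hom (apex (scomp f (scomp g h))) (apex (scomp p (scomp q h))))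
            (i' : Hom (apex (scomp f (scomp g h'))) (apex (scomp p (scomp q h'))))
            (al : Hom (apex (scomp q h')) (apex (scomp q h)))
            (be : Hom (apex (scomp g h')) (apex (scomp g h))),
        Lspan L h -> Lspan L h' -> phi_iso p f q g th h i -> phi_iso p f q g th h' i' ->
        cell (scomp q h) (scomp q h') al -> cell (scomp g h) (scomp g h') be ->
        compat p f (scomp q h) (scomp g h) i (scomp q h') (scomp g h') i' al be ->
        exists ga : Hom (apex h') (apex h),
          (cell h h' ga /\ whr q h h' ga al /\ whr g h h' ga be) /\
          forall ga', (cell h h' ga' /\ whr q h h' ga' al /\ whr g h h' ga' be) -> ga' = ga) /\
    (* Phi_X essentially surjective *)
    (forall (a : Span X A) (b : Span X B) (io : Hom (apex (scomp f b)) (apex (scomp p a))),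
        Lspan L a -> Lspan L b -> icell (scomp p a) (scomp f b) io ->
        exists (h : Span X P)
               (i : Hom (apex (scomp f (scomp g h))) (apex (scomp p (scomp q h))))
               (al : Hom (apex a) (apex (scomp q h))) (be : Hom (apex b) (apex (scomp g h))),
          Lspan L h /\ phi_iso p f q g th h i /\
          icell (scomp q h) a al /\ icell (scomp g h) b be /\
          compat p f (scomp q h) (scomp g h) i a b io al be).

(* ---------- groupoid opfibrations ----------
   the functor _LSpn(U,p) = p . - : _LSpn(U,A) -> _LSpn(U,C) *)
Definition gopfib {E : PBCat} (L : morclass E) {A C : E} (p : Span A C) (U : E) : Prop :=
  (* every morphism of _LSpn(U,A) is opcartesian *)
  (forall (x z w : Span U A) (ps : Hom (apex z) (apex x)) (ch : Hom (apex w) (apex x))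
          (ga : Hom (apex (scomp p w)) (apex (scomp p z))),
      Lspan L x -> Lspan L z -> Lspan L w -> cell x z ps -> cell x w ch ->
      cell (scomp p z) (scomp p w) ga ->
      (exists mps mch, whr p x z ps mps /\ whr p x w ch mch /\ mps ∘ ga = mch) ->
      exists de : Hom (apex w) (apex z),
        (cell z w de /\ ps ∘ de = ch /\ whr p z w de ga) /\
        forall de', (cell z w de' /\ ps ∘ de' = ch /\ whr p z w de' ga) -> de' = de) /\
  (* every phi : p.x => b lifts to psi : x => z, up to an iso iota : b => p.z *)
  (forall (x : Span U A) (b : Span U C) (ph : Hom (apex b) (apex (scomp p x))),
      Lspan L x -> Lspan L b -> cell (scomp p x) b ph ->
      exists (z : Span U A) (ps : Hom (apex z) (apex x)) (io : Hom (apex (scomp p z)) (apex b))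
             (mps : Hom (apex (scomp p z)) (apex (scomp p x))),
        Lspan L z /\ cell x z ps /\ icell b (scomp p z) io /\
        whr p x z ps mps /\ mps = ph ∘ io).

Definition spanclass (E : PBCat) := forall U V : E, Span U V -> Prop.

Definition bprotocal {E : PBCat} (L : morclass E) (M : spanclass E) : Prop :=
  (forall (U V : E) (s : Span U V), M _ _ s -> Lspan L s) /\
  (forall (U V : E) (s : Span U V), is_equiv L s -> M _ _ s) /\
  (forall (U V : E) (s t : Span U V) (f : Hom (apex t) (apex s)),
      Lspan L s -> Lspan L t -> M _ _ s -> icell s t f -> M _ _ t) /\
  (forall (U V W : E) (s : Span U V) (t : Span V W), M _ _ s -> M _ _ t -> M _ _ (scomp t s)) /\
  (forall (A B C : E) (p : Span A C) (f : Span B C), M _ _ p -> Lspan L f ->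
      (exists (P : E) (q : Span P A) (g : Span P B) (th : Hom (apex (scomp f g)) (apex (scomp p q))),
          is_bipb L p f q g th) /\
      (forall (P : E) (q : Span P A) (g : Span P B) (th : Hom (apex (scomp f g)) (apex (scomp p q))),
          is_bipb L p f q g th -> M _ _ g)) /\
  (forall (A C : E) (p : Span A C), M _ _ p -> forall U : E, gopfib L p U).

Definition Rstar {E : PBCat} (R : morclass E) : spanclass E :=
  fun U V s => is_iso (sl s) /\ R _ _ (sr s).

(* Main.v *)
Require Import Defs.
From Stdlib Require Import ClassicalEpsilon Setoid.

Lemma pre2 {E : Cat} {A B C D : E} (u : Hom B C) (v : Hom A B) (w : Hom A C) :
  u ∘ v = w -> forall (x : Hom C D), x ∘ u ∘ v = x ∘ w.
Proof. intros H x. rewrite <- cmp_assoc, H. reflexivity. Qed.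
Lemma pre3 {E : Cat} {A B C D F : E} (u : Hom C D) (v : Hom B C) (t : Hom A B) (w : Hom A D) :
  u ∘ v ∘ t = w -> forall (x : Hom D F), x ∘ u ∘ v ∘ t = x ∘ w.
Proof. intros H x. rewrite <- H, !cmp_assoc. reflexivity. Qed.
Lemma pre4 {E : Cat} {A B C D F G : E} (u : Hom D F) (u' : Hom C D) (v : Hom B C) (t : Hom A B) (w : Hom A F) :
  u ∘ u' ∘ v ∘ t = w -> forall (x : Hom F G), x ∘ u ∘ u' ∘ v ∘ t = x ∘ w.
Proof. intros H x. rewrite <- H, !cmp_assoc. reflexivity. Qed.

Arguments pre2 {E A B C D u v w}.
Arguments pre3 {E A B C D F u v t w}.
Arguments pre4 {E A B C D F G u u' v t w}.
Ltac nrm := repeat rewrite ?cmp_assoc, ?cmp_idl, ?cmp_idr.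
Ltac nrmin H := repeat rewrite ?cmp_assoc, ?cmp_idl, ?cmp_idr in H.
Ltac rw H := nrm; first [rewrite H | rewrite (pre2 H) | rewrite (pre3 H) | rewrite (pre4 H)
  | setoid_rewrite H | setoid_rewrite (pre2 H) | setoid_rewrite (pre3 H) | setoid_rewrite (pre4 H)]; nrm.

Lemma pb_comm {E : PBCat} {A B C : E} (u : Hom A C) (v : Hom B C) : u ∘ pb1 u v = v ∘ pb2 u v.
Proof. exact (proj1 (pb_ok u v)). Qed.

Lemma ispb_ext {E : PBCat} {A B C P X : E} (u : Hom A C) (v : Hom B C) (p1 : Hom P A) (p2 : Hom P B)
  (h h' : Hom X P) : is_pullback u v p1 p2 -> p1 ∘ h = p1 ∘ h' -> p2 ∘ h = p2 ∘ h' -> h = h'.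
Proof.
  intros [Hc Hu] H1 H2.
  destruct (Hu X (p1 ∘ h) (p2 ∘ h)) as [k [_ Hk]].
  { rewrite !cmp_assoc, Hc. reflexivity. }
  rewrite (Hk h eq_refl eq_refl), (Hk h' (eq_sym H1) (eq_sym H2)). reflexivity.
Qed.

Lemma ispb_lift {E : PBCat} {A B C P X : E} (u : Hom A C) (v : Hom B C) (p1 : Hom P A) (p2 : Hom P B)
  (a : Hom X A) (b : Hom X B) : is_pullback u v p1 p2 -> u ∘ a = v ∘ b ->
  exists h, p1 ∘ h = a /\ p2 ∘ h = b.
Proof. intros [Hc Hu] H. destruct (Hu X a b H) as [k [Hk _]]. eauto. Qed.

Lemma pb_ext {E : PBCat} {A B C X : E} (u : Hom A C) (v : Hom B C) (h h' : Hom X (pb u v)) :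
  pb1 u v ∘ h = pb1 u v ∘ h' -> pb2 u v ∘ h = pb2 u v ∘ h' -> h = h'.
Proof. apply ispb_ext with u v. apply pb_ok. Qed.

Definition pbl {E : PBCat} {A B C X : E} (u : Hom A C) (v : Hom B C) (a : Hom X A) (b : Hom X B)
  (H : u ∘ a = v ∘ b) : Hom X (pb u v) :=
  proj1_sig (constructive_indefinite_description _ (ispb_lift u v _ _ a b (pb_ok u v) H)).
Lemma pbl1 {E : PBCat} {A B C X : E} (u : Hom A C) (v : Hom B C) (a : Hom X A) (b : Hom X B) H :
  pb1 u v ∘ pbl u v a b H = a.
Proof. unfold pbl. destruct constructive_indefinite_description as [h [h1 h2]]. exact h1. Qed.
Lemma pbl2 {E : PBCat} {A B C X : E} (u : Hom A C) (v : Hom B C) (a : Hom X A) (b : Hom X B) H :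
  pb2 u v ∘ pbl u v a b H = b.
Proof. unfold pbl. destruct constructive_indefinite_description as [h [h1 h2]]. exact h2. Qed.

Lemma pb_sym {E : PBCat} {A B C P : E} (u : Hom A C) (v : Hom B C) (p1 : Hom P A) (p2 : Hom P B) :
  is_pullback u v p1 p2 -> is_pullback v u p2 p1.
Proof.
  intros [Hc Hu]. split. auto.
  intros X a b H. destruct (Hu X b a (eq_sym H)) as [h [[h1 h2] hu]].
  exists h. split. auto. intros h' e1 e2. auto.
Qed.

Lemma iso_id {E : Cat} (A : E) : is_iso (idm A).
Proof. exists (idm A). rewrite cmp_idl. auto. Qed.
Lemma iso_comp {E : Cat} {A B C : E} (f : Hom A B) (g : Hom B C) : is_iso f -> is_iso g -> is_iso (g ∘ f).
Proof.
  intros [f' [F1 F2]] [g' [G1 G2]]. exists (f' ∘ g'). split.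
  - rewrite <- cmp_assoc, (cmp_assoc g' g f), G1, cmp_idl. auto.
  - rewrite <- cmp_assoc, (cmp_assoc f f' g'), F2, cmp_idl. auto.
Qed.
Lemma iso_inv {E : Cat} {A B : E} (f : Hom A B) (g : Hom B A) : g ∘ f = idm A -> f ∘ g = idm B -> is_iso g.
Proof. intros. exists f. auto. Qed.
Lemma iso_mono {E : Cat} {A B X : E} (f : Hom A B) (a b : Hom X A) : is_iso f -> f ∘ a = f ∘ b -> a = b.
Proof.
  intros [g [G1 G2]] H. rewrite <- (cmp_idl a), <- (cmp_idl b), <- G1, <- !cmp_assoc, H. auto.
Qed.
Lemma iso_epi {E : Cat} {A B X : E} (f : Hom A B) (a b : Hom B X) : is_iso f -> a ∘ f = b ∘ f -> a = b.
Proof.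
  intros [g [G1 G2]] H. rewrite <- (cmp_idr a), <- (cmp_idr b), <- G2, !cmp_assoc, H. auto.
Qed.
Lemma iso_eq_l {E : Cat} {A B : E} (f g : Hom A B) : f = g -> is_iso f -> is_iso g.
Proof. intros ->; auto. Qed.

Lemma pb1_iso {E : PBCat} {A B C : E} (u : Hom A C) (v : Hom B C) : is_iso v -> is_iso (pb1 u v).
Proof.
  intros [v' [V1 V2]].
  assert (H : u ∘ idm A = v ∘ (v' ∘ u)) by (rewrite cmp_assoc, V2, cmp_idl, cmp_idr; auto).
  exists (pbl u v (idm A) (v' ∘ u) H). split.
  - apply pb_ext; nrm; rewrite ?pbl1, ?pbl2; nrm; auto.
    idtac.
    rw (pb_comm u v). rw V1. auto.
  - apply pbl1.
Qed.
Lemma pb2_iso {E : PBCat} {A B C : E} (u : Hom A C) (v : Hom B C) : is_iso u -> is_iso (pb2 u v).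
Proof.
  intros [u' [U1 U2]].
  assert (H : u ∘ (u' ∘ v) = v ∘ idm B) by (rewrite cmp_assoc, U2, cmp_idl, cmp_idr; auto).
  exists (pbl u v (u' ∘ v) (idm B) H). split.
  - apply pb_ext; nrm; rewrite ?pbl1, ?pbl2; nrm; auto.
    idtac.
    rw (eq_sym (pb_comm u v)). rw U1. auto.
  - apply pbl2.
Qed.


Lemma pc_iso {E : PBCat} (M : morclass E) {A B : E} (f : Hom A B) : protocal M -> is_iso f -> M _ _ f.
Proof. intros H. apply H. Qed.
Lemma pc_comp {E : PBCat} (M : morclass E) {A B C : E} (f : Hom A B) (g : Hom B C) :
  protocal M -> M _ _ f -> M _ _ g -> M _ _ (g ∘ f).
Proof. intros H. apply H. Qed.
Lemma pc_pb1 {E : PBCat} (M : morclass E) {A B C : E} (u : Hom A C) (v : Hom B C) :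
  protocal M -> M _ _ v -> M _ _ (pb1 u v).
Proof. intros H. apply (proj2 (proj2 (proj2 (proj2 H))) _ _ _ _ v u (pb2 u v)). apply pb_sym, pb_ok. Qed.
Lemma pc_pb2 {E : PBCat} (M : morclass E) {A B C : E} (u : Hom A C) (v : Hom B C) :
  protocal M -> M _ _ u -> M _ _ (pb2 u v).
Proof. intros H. apply (proj2 (proj2 (proj2 (proj2 H))) _ _ _ _ u v (pb1 u v)). apply pb_ok. Qed.
Lemma pc_isor {E : PBCat} (M : morclass E) {A B C : E} (f : Hom A B) (i : Hom B C) :
  protocal M -> M _ _ f -> is_iso i -> M _ _ (i ∘ f).
Proof. intros H. apply H. Qed.
Lemma pc_isol {E : PBCat} (M : morclass E) {A B C : E} (i : Hom A B) (f : Hom B C) :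
  protocal M -> is_iso i -> M _ _ f -> M _ _ (f ∘ i).
Proof. intros H. apply H. Qed.

Lemma equiv_core {E : PBCat} {S T A B P Q : E} (u : Hom S A) (v : Hom S B) (u' : Hom T B) (v' : Hom T A)
  (p1 : Hom P S) (p2 : Hom P T) (q1 : Hom Q T) (q2 : Hom Q S) :
  is_pullback v u' p1 p2 -> is_pullback v' u q1 q2 -> is_iso (u ∘ p1) -> u ∘ p1 = v' ∘ p2 ->
  (exists b, u' ∘ q1 ∘ b = idm B) -> u' ∘ q1 = v ∘ q2 -> is_iso u.
Proof.
  intros HP HQ Hiso E1 [b Hb] E2.
  destruct Hiso as [g [G1 G2]].
  assert (mono : forall X (x y : Hom X S), u ∘ x = u ∘ y -> x = y).
  { intros X x y Hxy.
    set (t1 := q1 ∘ b ∘ v ∘ x).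
    assert (T1 : u' ∘ t1 = v ∘ x) by (unfold t1; rw Hb; auto).
    destruct (ispb_lift _ _ _ _ x t1 HP (eq_sym T1)) as [pt1 [P11 P12]].
    assert (T2 : v' ∘ t1 = u ∘ x).
    { rewrite <- P12, <- P11. nrm. rewrite <- E1. auto. }
    destruct (ispb_lift _ _ _ _ t1 y HQ (eq_trans T2 Hxy)) as [pt2 [P21 P22]].
    assert (T3 : v ∘ y = u' ∘ t1).
    { rewrite <- P21, <- P22. nrm. rewrite E2. auto. }
    destruct (ispb_lift _ _ _ _ y t1 HP T3) as [pt3 [P31 P32]].
    assert (Hp : pt1 = pt3).
    { apply (iso_mono (u ∘ p1)). exists g; auto. rw P11. rw P31. auto. }
    rewrite <- P11, <- P31, Hp. auto. }
  exists (p1 ∘ g). split.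
  - apply mono. nrm. rewrite G2. nrm. auto.
  - nrm. auto.
Qed.

Lemma equiv_legs {E : PBCat} {A B : E} (e : Span A B) (e' : Span B A)
  (a : Hom (apex (sid A)) (apex (scomp e' e))) (b : Hom (apex (sid B)) (apex (scomp e e'))) :
  icell (scomp e' e) (sid A) a -> icell (scomp e e') (sid B) b -> is_iso (sl e) /\ is_iso (sr e).
Proof.
  intros [[A1 A2] [ga [_ [GA1 GA2]]]] [[B1 B2] [gb [_ [GB1 GB2]]]].
  simpl in *.
  assert (EA1 : sl e ∘ pb1 (sr e) (sl e') = ga).
  { rewrite <- (cmp_idr (_ ∘ _)), <- GA1. nrm. rewrite A1. nrm. auto. }
  assert (EA2 : sr e' ∘ pb2 (sr e) (sl e') = ga).
  { rewrite <- (cmp_idr (_ ∘ _)), <- GA1. nrm. rewrite A2. nrm. auto. }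
  assert (EB1 : sl e' ∘ pb1 (sr e') (sl e) = gb).
  { rewrite <- (cmp_idr (_ ∘ _)), <- GB1. nrm. rewrite B1. nrm. auto. }
  assert (EB2 : sr e ∘ pb2 (sr e') (sl e) = gb).
  { rewrite <- (cmp_idr (_ ∘ _)), <- GB1. nrm. rewrite B2. nrm. auto. }
  assert (Iga : is_iso ga) by (exists a; auto).
  assert (Igb : is_iso gb) by (exists b; auto).
  split.
  - apply (equiv_core (sl e) (sr e) (sl e') (sr e') (pb1 (sr e) (sl e')) (pb2 (sr e) (sl e'))
             (pb1 (sr e') (sl e)) (pb2 (sr e') (sl e))).
    + apply pb_ok.
    + apply pb_ok.
    + rewrite EA1; auto.
    + congruence.
    + exists b. rewrite EB1. auto.
    + congruence.
  - apply (equiv_core (sr e) (sl e) (sr e') (sl e') (pb2 (sr e') (sl e)) (pb1 (sr e') (sl e))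
             (pb2 (sr e) (sl e')) (pb1 (sr e) (sl e'))).
    + apply pb_sym, pb_ok.
    + apply pb_sym, pb_ok.
    + rewrite EB2; auto.
    + congruence.
    + exists a. rewrite EA2. auto.
    + congruence.
Qed.


Lemma gopfib_ok {E : PBCat} (L : morclass E) {A C : E} (p : Span A C) (U : E) :
  is_iso (sl p) -> gopfib L p U.
Proof.
  intros Is. split.
  - intros x z w ps ch ga Lx Lz Lw [Cps1 Cps2] [Cch1 Cch2] [Cga1 Cga2] [mps [mch [[W1 W2] [[W3 W4] W5]]]].
    cbn [sl sr apex scomp] in *.
    destruct (pb1_iso (sr w) (sl p) Is) as [iw [IW1 IW2]].
    set (de := pb1 (sr z) (sl p) ∘ ga ∘ iw).
    assert (D1 : de ∘ pb1 (sr w) (sl p) = pb1 (sr z) (sl p) ∘ ga) by (unfold de; rw IW1; auto).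
    exists de. split.
    + assert (D2 : ps ∘ de = ch).
      { unfold de. nrm. rewrite <- W1. nrm. rw W5. rw W3. rw IW2. auto. }
      split; [split|split; [exact D2|split; [exact (eq_sym D1)|]]].
      * unfold de. rw Cga1. rw IW2. auto.
      * rewrite <- Cps2, <- Cch2, <- D2. nrm. auto.
      * apply (iso_mono (sl p)); auto.
        nrm. rewrite <- !pb_comm. rw (eq_sym D1). 
        assert (sr z ∘ de = sr w) by (rewrite <- Cps2, <- Cch2, <- D2; nrm; auto).
        rw H. apply pb_comm.
    + intros de' [_ [_ [Wd _]]].
      apply (iso_epi (pb1 (sr w) (sl p))). exists iw; auto.
      rewrite D1, <- Wd. auto.
  - intros x b ph Lx Lb [Cph1 Cph2]. cbn [sl sr apex scomp] in *.
    set (z := mkSpan (apex b) (sl b) (sl p ∘ pb2 (sr x) (sl p) ∘ ph) : Span U A).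
    destruct (pb1_iso (sr z) (sl p) Is) as [iz [IZ1 IZ2]].
    assert (P2z : pb2 (sr z) (sl p) = pb2 (sr x) (sl p) ∘ ph ∘ pb1 (sr z) (sl p)).
    { apply (iso_mono (sl p)); auto. rewrite <- pb_comm. cbn [sl sr apex scomp]. nrm. auto. }
    exists z, (pb1 (sr x) (sl p) ∘ ph), (pb1 (sr z) (sl p)), (ph ∘ pb1 (sr z) (sl p)).
    split; [|split; [|split; [|split]]].
    + exact Lb.
    + split; cbn [sl sr apex scomp]. nrm. auto. rw (pb_comm (sr x) (sl p)). auto.
    + split.
      * split; cbn [sl sr apex scomp]. auto. rewrite <- Cph2, P2z. nrm. auto.
      * exists iz. split; [|split]; auto. split; cbn [sl sr apex scomp].
        -- rw IZ2. auto.
        -- rewrite P2z. nrm. rw IZ2. auto.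
    + split; cbn [sl sr apex scomp]. nrm. auto. rewrite P2z. nrm. auto.
    + auto.
Qed.


Lemma Jcomm {E : PBCat} {X' X B C : E} (f : Span B C) (b : Span X B) (e : Span X' X) :
  sr b ∘ (pb2 (sr e) (sl b) ∘ pb1 (sr (scomp b e)) (sl f)) = sl f ∘ pb2 (sr (scomp b e)) (sl f).
Proof. rewrite cmp_assoc. exact (pb_comm (sr (scomp b e)) (sl f)). Qed.

Definition Jm {E : PBCat} {X' X B C : E} (f : Span B C) (b : Span X B) (e : Span X' X) :
  Hom (apex (scomp f (scomp b e))) (apex (scomp f b)) :=
  pbl (sr b) (sl f) _ _ (Jcomm f b e).

Lemma Jm1 {E : PBCat} {X' X B C : E} (f : Span B C) (b : Span X B) (e : Span X' X) :
  pb1 (sr b) (sl f) ∘ Jm f b e = pb2 (sr e) (sl b) ∘ pb1 (sr (scomp b e)) (sl f).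
Proof. apply pbl1. Qed.
Lemma Jm2 {E : PBCat} {X' X B C : E} (f : Span B C) (b : Span X B) (e : Span X' X) :
  pb2 (sr b) (sl f) ∘ Jm f b e = pb2 (sr (scomp b e)) (sl f).
Proof. apply pbl2. Qed.

Lemma Acomm {E : PBCat} {A B C D : E} (x : Span C D) (y : Span B C) (z : Span A B) :
  sr z ∘ (pb1 (sr z) (sl y) ∘ pb1 (sr (scomp y z)) (sl x)) = sl (scomp x y) ∘ Jm x y z.
Proof.
  change (sl (scomp x y)) with (sl y ∘ pb1 (sr y) (sl x)).
  rw (Jm1 x y z). rw (pb_comm (sr z) (sl y)). auto.
Qed.

Definition Am {E : PBCat} {A B C D : E} (x : Span C D) (y : Span B C) (z : Span A B) :
  Hom (apex (scomp x (scomp y z))) (apex (scomp (scomp x y) z)) :=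
  pbl (sr z) (sl (scomp x y)) _ _ (Acomm x y z).

Lemma Am1 {E : PBCat} {A B C D : E} (x : Span C D) (y : Span B C) (z : Span A B) :
  pb1 (sr z) (sl (scomp x y)) ∘ Am x y z = pb1 (sr z) (sl y) ∘ pb1 (sr (scomp y z)) (sl x).
Proof. apply pbl1. Qed.
Lemma Am2 {E : PBCat} {A B C D : E} (x : Span C D) (y : Span B C) (z : Span A B) :
  pb2 (sr z) (sl (scomp x y)) ∘ Am x y z = Jm x y z.
Proof. apply pbl2. Qed.

Lemma Am_rel {E : PBCat} {A B C D : E} (x : Span C D) (y : Span B C) (z : Span A B) :
  assoc_rel x y z (Am x y z).
Proof.
  split; [|split].
  - apply Am1.
  - rewrite Am2. apply Jm1.
  - rewrite Am2. apply Jm2.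
Qed.

Lemma assoc_uniq {E : PBCat} {A B C D : E} (x : Span C D) (y : Span B C) (z : Span A B) a :
  assoc_rel x y z a -> a = Am x y z.
Proof.
  intros [H1 [H2 H3]]. apply pb_ext.
  - rewrite H1, Am1. auto.
  - rewrite Am2. apply pb_ext. rewrite H2, Jm1. auto. rewrite H3, Jm2. auto.
Qed.

Lemma whl_ex {E : PBCat} {X P C : E} (s t : Span P C) (h : Span X P) (f : Hom (apex t) (apex s)) :
  sl s ∘ f = sl t -> exists g, whl s t h f g.
Proof.
  intros H.
  assert (Hc : sr h ∘ pb1 (sr h) (sl t) = sl s ∘ (f ∘ pb2 (sr h) (sl t))).
  { rewrite cmp_assoc, H. apply pb_comm. }
  exists (pbl _ _ _ _ Hc). split. apply pbl1. apply pbl2.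
Qed.
Lemma whl_uniq {E : PBCat} {X P C : E} (s t : Span P C) (h : Span X P) (f : Hom (apex t) (apex s)) g g' :
  whl s t h f g -> whl s t h f g' -> g = g'.
Proof. intros [H1 H2] [H1' H2']. apply pb_ext; congruence. Qed.
Lemma whr_ex {E : PBCat} {U A C : E} (p : Span A C) (s t : Span U A) (f : Hom (apex t) (apex s)) :
  sr s ∘ f = sr t -> exists g, whr p s t f g.
Proof.
  intros H.
  assert (Hc : sr s ∘ (f ∘ pb1 (sr t) (sl p)) = sl p ∘ pb2 (sr t) (sl p)).
  { rewrite cmp_assoc, H. apply pb_comm. }
  exists (pbl _ _ _ _ Hc). split. apply pbl1. apply pbl2.
Qed.
Lemma whr_uniq {E : PBCat} {U A C : E} (p : Span A C) (s t : Span U A) (f : Hom (apex t) (apex s)) g g' :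
  whr p s t f g -> whr p s t f g' -> g = g'.
Proof. intros [H1 H2] [H1' H2']. apply pb_ext; congruence. Qed.

Lemma whr_comp {E : PBCat} {U A C : E} (p : Span A C) (s t u : Span U A) f f' g g' :
  whr p s t f g -> whr p t u f' g' -> whr p s u (f ∘ f') (g ∘ g').
Proof.
  intros [H1 H2] [H1' H2']. split.
  - rw H1. rw H1'. auto.
  - rw H2. rw H2'. auto.
Qed.
Lemma whr_id {E : PBCat} {U A C : E} (p : Span A C) (s : Span U A) :
  whr p s s (idm _) (idm _).
Proof. split; nrm; auto. Qed.

Lemma icell_of_iso {E : PBCat} {U V : E} (s t : Span U V) f :
  cell s t f -> is_iso f -> icell s t f.
Proof.
  intros [C1 C2] [g [G1 G2]]. split. split; auto.
  exists g. split; [|split]; auto. split.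
  - rewrite <- C1. rw G2. auto.
  - rewrite <- C2. rw G2. auto.
Qed.

(* the leaves characterization of the transported 2-cell *)
Definition LV {E : PBCat} {A B C X X' : E} (p : Span A C) (f : Span B C) (a : Span X A) (b : Span X B)
  (io : Hom (apex (scomp f b)) (apex (scomp p a))) (e : Span X' X)
  (j : Hom (apex (scomp f (scomp b e))) (apex (scomp p (scomp a e)))) : Prop :=
  pb1 (sr e) (sl a) ∘ pb1 (sr (scomp a e)) (sl p) ∘ j = pb1 (sr e) (sl b) ∘ pb1 (sr (scomp b e)) (sl f) /\
  pb2 (sr e) (sl a) ∘ pb1 (sr (scomp a e)) (sl p) ∘ j = pb1 (sr a) (sl p) ∘ io ∘ Jm f b e /\
  pb2 (sr (scomp a e)) (sl p) ∘ j = pb2 (sr a) (sl p) ∘ io ∘ Jm f b e.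

Lemma phi_LV {E : PBCat} {A B C X X' : E} (p : Span A C) (f : Span B C) (a : Span X A) (b : Span X B)
  io (e : Span X' X) j : phi_iso p f a b io e j -> LV p f a b io e j.
Proof.
  intros [a1 [a2 [m [R1 [R2 [W Heq]]]]]].
  apply assoc_uniq in R1. apply assoc_uniq in R2. subst a1 a2.
  destruct W as [W1 W2].
  assert (K : pb2 (sr e) (sl (scomp f b)) ∘ Am f b e = Jm f b e) by apply Am2.
  split; [|split].
  - rewrite <- (Am1 p a e). rw Heq. rw W1. apply Am1.
  - rewrite <- (Jm1 p a e), <- (Am2 p a e). rw Heq. rw W2. rw K. auto.
  - rewrite <- (Jm2 p a e), <- (Am2 p a e). rw Heq. rw W2. rw K. auto.
Qed.

Lemma LV_cellL {E : PBCat} {A B C X X' : E} (p : Span A C) (f : Span B C) (a : Span X A) (b : Span X B)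
  io (e : Span X' X) j : LV p f a b io e j -> sl (scomp p (scomp a e)) ∘ j = sl (scomp f (scomp b e)).
Proof.
  intros [L1 _].
  change (sl e ∘ pb1 (sr e) (sl a) ∘ pb1 (sr (scomp a e)) (sl p) ∘ j =
          sl e ∘ pb1 (sr e) (sl b) ∘ pb1 (sr (scomp b e)) (sl f)).
  rw L1. auto.
Qed.

Lemma LV_uniq {E : PBCat} {A B C X X' : E} (p : Span A C) (f : Span B C) (a : Span X A) (b : Span X B)
  io (e : Span X' X) j j' : LV p f a b io e j -> LV p f a b io e j' -> j = j'.
Proof.
  intros [L1 [L2 L3]] [L1' [L2' L3']].
  apply pb_ext. apply pb_ext.
  - nrm. rewrite L1, L1'. auto.
  - nrm. rewrite L2, L2'. auto.
  - rewrite L3, L3'. auto.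
Qed.

Lemma LV_ex {E : PBCat} {A B C X X' : E} (p : Span A C) (f : Span B C) (a : Span X A) (b : Span X B)
  io (e : Span X' X) : sl (scomp p a) ∘ io = sl (scomp f b) -> exists j, LV p f a b io e j.
Proof.
  intros Hio.
  assert (H1 : sr e ∘ (pb1 (sr e) (sl b) ∘ pb1 (sr (scomp b e)) (sl f)) =
               sl a ∘ (pb1 (sr a) (sl p) ∘ io ∘ Jm f b e)).
  { change (sl (scomp p a)) with (sl a ∘ pb1 (sr a) (sl p)) in Hio.
    change (sl (scomp f b)) with (sl b ∘ pb1 (sr b) (sl f)) in Hio.
    nrm. nrmin Hio. rw Hio. rw (Jm1 f b e). rw (pb_comm (sr e) (sl b)). auto. }
  set (J1 := pbl _ _ _ _ H1).
  assert (H2 : sr (scomp a e) ∘ J1 = sl p ∘ (pb2 (sr a) (sl p) ∘ io ∘ Jm f b e)).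
  { change (sr (scomp a e)) with (sr a ∘ pb2 (sr e) (sl a)). unfold J1.
    rw (pbl2 _ _ _ _ H1). rw (pb_comm (sr a) (sl p)). auto. }
  exists (pbl _ _ _ _ H2). split; [|split].
  - rw (pbl1 _ _ _ _ H2). unfold J1. rw (pbl1 _ _ _ _ H1). auto.
  - rw (pbl1 _ _ _ _ H2). unfold J1. rw (pbl2 _ _ _ _ H1). auto.
  - rw (pbl2 _ _ _ _ H2). auto.
Qed.

Lemma LV_phi {E : PBCat} {A B C X X' : E} (p : Span A C) (f : Span B C) (a : Span X A) (b : Span X B)
  io (e : Span X' X) j : sl (scomp p a) ∘ io = sl (scomp f b) -> LV p f a b io e j -> phi_iso p f a b io e j.
Proof.
  intros Hio [L1 [L2 L3]].
  destruct (whl_ex (scomp p a) (scomp f b) e io Hio) as [m [W1 W2]].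
  exists (Am p a e), (Am f b e), m. split; [apply Am_rel|split; [apply Am_rel|split; [split; auto|]]].
  apply pb_ext.
  - rw (Am1 p a e). rw L1. rw W1. rw (Am1 f b e). auto.
  - nrm. rw (Am2 p a e). rw W2. rw (Am2 f b e). apply pb_ext.
    + rw (Jm1 p a e). rw L2. auto.
    + rw (Jm2 p a e). rw L3. auto.
Qed.


Definition ICiso {E : PBCat} {A B C X : E} (p : Span A C) (f : Span B C)
  (a : Span X A) (b : Span X B) (io : Hom (apex (scomp f b)) (apex (scomp p a)))
  (a' : Span X A) (b' : Span X B) (io' : Hom (apex (scomp f b')) (apex (scomp p a'))) : Prop :=
  exists al be, icell a a' al /\ icell b b' be /\ compat p f a b io a' b' io' al be.

Lemma whr_inv {E : PBCat} {U A C : E} (p : Span A C) (s t : Span U A) f f' g g' :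
  whr p s t f g -> whr p t s f' g' -> f' ∘ f = idm _ -> g' ∘ g = idm _.
Proof.
  intros W W' Hf. pose proof (whr_comp p t s t f' f g' g W' W) as Wc. rewrite Hf in Wc.
  apply (whr_uniq p t t (idm _)); auto. apply whr_id.
Qed.

Lemma compat_inv {E : PBCat} {A B C X : E} (p : Span A C) (f : Span B C)
  (a : Span X A) (b : Span X B) io a' b' io' al be al' be' :
  compat p f a b io a' b' io' al be -> sr a' ∘ al' = sr a -> sr b' ∘ be' = sr b ->
  al ∘ al' = idm _ -> al' ∘ al = idm _ -> be ∘ be' = idm _ -> be' ∘ be = idm _ ->
  compat p f a' b' io' a b io al' be'.
Proof.
  intros [ma [mb [Wa [Wb Hc]]]] Ha Hb A1 A2 B1 B2.
  destruct (whr_ex p a' a al' Ha) as [ma' Wa'].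
  destruct (whr_ex f b' b be' Hb) as [mb' Wb'].
  exists ma', mb'. split; [|split]; auto.
  assert (M1 : ma' ∘ ma = idm _) by (apply (whr_inv p a a' al al' ma ma'); auto).
  assert (M2 : mb ∘ mb' = idm _) by (apply (whr_inv f b' b be' be mb' mb); auto).
  rewrite <- (cmp_idl (io' ∘ mb')), <- M1. rewrite <- cmp_assoc, (cmp_assoc ma io' mb').
  rewrite <- Hc. nrm. rw M2. auto.
Qed.

Lemma ICiso_sym {E : PBCat} {A B C X : E} (p : Span A C) (f : Span B C)
  (a : Span X A) (b : Span X B) io a' b' io' :
  ICiso p f a b io a' b' io' -> ICiso p f a' b' io' a b io.
Proof.
  intros [al [be [[Ca [al' [Ca' [A1 A2]]]] [[Cb [be' [Cb' [B1 B2]]]] Hc]]]].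
  exists al', be'. split; [|split].
  - split; auto. exists al. auto.
  - split; auto. exists be. auto.
  - apply (compat_inv p f a b io a' b' io' al be); auto. apply Ca'. apply Cb'.
Qed.

Lemma icell_comp {E : PBCat} {U V : E} (s t u : Span U V) f f' :
  icell s t f -> icell t u f' -> icell s u (f ∘ f').
Proof.
  intros [[C1 C2] [g [[D1 D2] [G1 G2]]]] [[C1' C2'] [g' [[D1' D2'] [G1' G2']]]].
  split. split. rw C1. auto. rw C2. auto.
  exists (g' ∘ g). split. split. rw D1'. auto. rw D2'. auto.
  split. rw G1'. auto. rw G2. auto.
Qed.

Lemma ICiso_trans {E : PBCat} {A B C X : E} (p : Span A C) (f : Span B C)
  (a : Span X A) (b : Span X B) io a' b' io' a'' b'' io'' :
  ICiso p f a b io a' b' io' -> ICiso p f a' b' io' a'' b'' io'' -> ICiso p f a b io a'' b'' io''.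
Proof.
  intros [al [be [Ia [Ib [ma [mb [Wa [Wb Hc]]]]]]]] [al' [be' [Ia' [Ib' [ma' [mb' [Wa' [Wb' Hc']]]]]]]].
  exists (al ∘ al'), (be ∘ be'). split; [|split].
  - eapply icell_comp; eauto.
  - eapply icell_comp; eauto.
  - exists (ma ∘ ma'), (mb ∘ mb'). split; [|split].
    + eapply whr_comp; eauto.
    + eapply whr_comp; eauto.
    + rw Hc. rw Hc'. auto.
Qed.

Lemma whl_comp {E : PBCat} {X P C : E} (s t u : Span P C) (h : Span X P) f f' g g' :
  whl s t h f g -> whl t u h f' g' -> whl s u h (f ∘ f') (g ∘ g').
Proof.
  intros [H1 H2] [H1' H2']. split.
  - rw H1. rw H1'. auto.
  - rw H2. rw H2'. auto.
Qed.
Lemma whl_id {E : PBCat} {X P C : E} (s : Span P C) (h : Span X P) :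
  whl s s h (idm _) (idm _).
Proof. split; nrm; auto. Qed.

Lemma icell_whl {E : PBCat} {X P C : E} (s t : Span P C) (h : Span X P) f g :
  icell s t f -> whl s t h f g -> icell (scomp s h) (scomp t h) g.
Proof.
  intros [[C1 C2] [f' [[D1 D2] [F1 F2]]]] W.
  destruct (whl_ex t s h f' D1) as [g' W'].
  split.
  - destruct W as [W1 W2]. split.
    + change (sl h ∘ pb1 (sr h) (sl s) ∘ g = sl h ∘ pb1 (sr h) (sl t)). rw W1. auto.
    + change (sr s ∘ pb2 (sr h) (sl s) ∘ g = sr t ∘ pb2 (sr h) (sl t)). rw W2. rw C2. auto.
  - exists g'. split; [|split].
    + destruct W' as [W1 W2]. split.
      * change (sl h ∘ pb1 (sr h) (sl t) ∘ g' = sl h ∘ pb1 (sr h) (sl s)). rw W1. auto.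
      * change (sr t ∘ pb2 (sr h) (sl t) ∘ g' = sr s ∘ pb2 (sr h) (sl s)). rw W2. rw D2. auto.
    + pose proof (whl_comp s t s h f f' g g' W W') as Wc. rewrite F1 in Wc.
      apply (whl_uniq s s h (idm _)); auto. apply whl_id.
    + pose proof (whl_comp t s t h f' f g' g W' W) as Wc. rewrite F2 in Wc.
      apply (whl_uniq t t h (idm _)); auto. apply whl_id.
Qed.

Lemma JN {E : PBCat} {X' X B C : E} (f : Span B C) (b b' : Span X B) (e : Span X' X) be be_e mb mb_e :
  whr f (scomp b e) (scomp b' e) be_e mb_e -> whl b b' e be be_e -> whr f b b' be mb ->
  Jm f b e ∘ mb_e = mb ∘ Jm f b' e.
Proof.
  intros [R1 R2] [L1 L2] [S1 S2]. apply pb_ext.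
  - rw (Jm1 f b e). rw R1. rw L2. rw S1. rw (Jm1 f b' e). auto.
  - rw (Jm2 f b e). rw R2. rw S2. rw (Jm2 f b' e). auto.
Qed.

Lemma ICiso_whisk {E : PBCat} {A B C X X' : E} (p : Span A C) (f : Span B C)
  (a : Span X A) (b : Span X B) io a' b' io' (e : Span X' X) j j' :
  ICiso p f a b io a' b' io' -> LV p f a b io e j -> LV p f a' b' io' e j' ->
  ICiso p f (scomp a e) (scomp b e) j (scomp a' e) (scomp b' e) j'.
Proof.
  intros [al [be [Ia [Ib [ma [mb [Wa [Wb Hc]]]]]]]] [L1 [L2 L3]] [L1' [L2' L3']].
  destruct (whl_ex a a' e al (proj1 (proj1 Ia))) as [al_e Wal].
  destruct (whl_ex b b' e be (proj1 (proj1 Ib))) as [be_e Wbe].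
  assert (Iae := icell_whl _ _ _ _ _ Ia Wal).
  assert (Ibe := icell_whl _ _ _ _ _ Ib Wbe).
  destruct (whr_ex p _ _ al_e (proj2 (proj1 Iae))) as [ma_e Wae].
  destruct (whr_ex f _ _ be_e (proj2 (proj1 Ibe))) as [mb_e Wbe2].
  exists al_e, be_e. split; [|split]; auto.
  exists ma_e, mb_e. split; [|split]; auto.
  pose proof (JN f b b' e be be_e mb mb_e Wbe2 Wbe Wb) as HJ.
  destruct Wae as [Ma1 Ma2]. destruct Wbe2 as [Mb1 Mb2]. destruct Wal as [Al1 Al2]. destruct Wbe as [Be1 Be2].
  apply pb_ext. apply pb_ext.
  - rw L1. rw Mb1. rw Be1. rw Ma1. rw Al1. rw L1'. auto.
  - rw L2. rw HJ. rw Hc. rw Ma1. rw Al2. rw L2'. destruct Wa as [Wa1 Wa2]. rw Wa1. auto.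
  - rw L3. rw HJ. rw Hc. rw Ma2. rw L3'. destruct Wa as [Wa1 Wa2]. rw Wa2. auto.
Qed.

Lemma Am_iso {E : PBCat} {A B C D : E} (x : Span C D) (y : Span B C) (z : Span A B) : is_iso (Am x y z).
Proof.
  assert (H : sr z ∘ pb1 (sr z) (sl (scomp x y)) = sl y ∘ (pb1 (sr y) (sl x) ∘ pb2 (sr z) (sl (scomp x y)))).
  { rewrite cmp_assoc. exact (pb_comm (sr z) (sl (scomp x y))). }
  set (K := pbl _ _ _ _ H).
  assert (H' : sr (scomp y z) ∘ K = sl x ∘ (pb2 (sr y) (sl x) ∘ pb2 (sr z) (sl (scomp x y)))).
  { change (sr (scomp y z)) with (sr y ∘ pb2 (sr z) (sl y)). unfold K. rw (pbl2 _ _ _ _ H).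
    rw (pb_comm (sr y) (sl x)). auto. }
  exists (pbl _ _ _ _ H'). split.
  - apply pb_ext; [apply pb_ext|].
    + rw (pbl1 _ _ _ _ H'). unfold K. rw (pbl1 _ _ _ _ H). rw (Am1 x y z). auto.
    + rw (pbl1 _ _ _ _ H'). unfold K. rw (pbl2 _ _ _ _ H). rw (Am2 x y z). rw (Jm1 x y z). auto.
    + rw (pbl2 _ _ _ _ H'). rw (Am2 x y z). rw (Jm2 x y z). auto.
  - apply pb_ext; [|apply pb_ext].
    + rw (Am1 x y z). rw (pbl1 _ _ _ _ H'). unfold K. rw (pbl1 _ _ _ _ H). auto.
    + rw (Am2 x y z). rw (Jm1 x y z). rw (pbl1 _ _ _ _ H'). unfold K. rw (pbl2 _ _ _ _ H). auto.
    + rw (Am2 x y z). rw (Jm2 x y z). rw (pbl2 _ _ _ _ H'). auto.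
Qed.

Lemma Am_cell {E : PBCat} {A B C D : E} (x : Span C D) (y : Span B C) (z : Span A B) :
  cell (scomp (scomp x y) z) (scomp x (scomp y z)) (Am x y z).
Proof.
  split.
  - change (sl z ∘ pb1 (sr z) (sl (scomp x y)) ∘ Am x y z =
            sl z ∘ pb1 (sr z) (sl y) ∘ pb1 (sr (scomp y z)) (sl x)). rw (Am1 x y z). auto.
  - change (sr x ∘ pb2 (sr y) (sl x) ∘ pb2 (sr z) (sl (scomp x y)) ∘ Am x y z =
            sr x ∘ pb2 (sr (scomp y z)) (sl x)). rw (Am2 x y z). rw (Jm2 x y z). auto.
Qed.

Lemma JA {E : PBCat} {X'' X' X B C : E} (f : Span B C) (g : Span X B) (h : Span X' X) (e : Span X'' X') mb :
  whr f (scomp (scomp g h) e) (scomp g (scomp h e)) (Am g h e) mb ->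
  Jm f g h ∘ Jm f (scomp g h) e ∘ mb = Jm f g (scomp h e).
Proof.
  intros [M1 M2]. apply pb_ext.
  - rw (Jm1 f g h). rw (Jm1 f (scomp g h) e). rw M1. rw (Am2 g h e). rw (Jm2 g h e). rw (Jm1 f g (scomp h e)). auto.
  - rw (Jm2 f g h). rw (Jm2 f (scomp g h) e). rw M2. rw (Jm2 f g (scomp h e)). auto.
Qed.

Lemma ICiso_assoc {E : PBCat} {A B C P X X' : E} (p : Span A C) (f : Span B C)
  (q : Span P A) (g : Span P B) th (h : Span X P) (e : Span X' X) i j k :
  LV p f q g th h i -> LV p f (scomp q h) (scomp g h) i e j -> LV p f q g th (scomp h e) k ->
  ICiso p f (scomp (scomp q h) e) (scomp (scomp g h) e) j (scomp q (scomp h e)) (scomp g (scomp h e)) k.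
Proof.
  intros [Li1 [Li2 Li3]] [Lj1 [Lj2 Lj3]] [Lk1 [Lk2 Lk3]].
  assert (Ia := icell_of_iso _ _ _ (Am_cell q h e) (Am_iso q h e)).
  assert (Ib := icell_of_iso _ _ _ (Am_cell g h e) (Am_iso g h e)).
  destruct (whr_ex p _ _ _ (proj2 (proj1 Ia))) as [ma [Ma1 Ma2]].
  destruct (whr_ex f _ _ _ (proj2 (proj1 Ib))) as [mb Wmb].
  pose proof (JA f g h e mb Wmb) as HJ. destruct Wmb as [Mb1 Mb2].
  exists (Am q h e), (Am g h e). split; [|split]; auto.
  exists ma, mb. split; [|split]; [split; auto|split; auto|].
  apply pb_ext; [apply pb_ext; [|apply pb_ext]|].
  - rw Lj1. rw Mb1. rw (Am1 g h e). rw Ma1. rw (Am1 q h e). rw Lk1. auto.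
  - rw Lj2. rw Li1. rw (Jm1 f (scomp g h) e). rw Mb1. rw (Am2 g h e). rw (Jm1 g h e).
    rw Ma1. rw (Am2 q h e). rw (Jm1 q h e). rw Lk1. auto.
  - rw Lj2. rw Li2. rw HJ. rw Ma1. rw (Am2 q h e). rw (Jm2 q h e). rw Lk2. auto.
  - rw Lj3. rw Li3. rw HJ. rw Ma2. rw Lk3. auto.
Qed.

Lemma ICiso_unit {E : PBCat} {A B C P : E} (p : Span A C) (f : Span B C)
  (q : Span P A) (g : Span P B) th i :
  LV p f q g th (sid P) i -> ICiso p f q g th (scomp q (sid P)) (scomp g (sid P)) i.
Proof.
  intros [L1 [L2 L3]].
  assert (Cq : cell q (scomp q (sid P)) (pb2 (sr (sid P)) (sl q))).
  { split. simpl. symmetry. exact (pb_comm (idm P) _). reflexivity. }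
  assert (Cg : cell g (scomp g (sid P)) (pb2 (sr (sid P)) (sl g))).
  { split. simpl. symmetry. exact (pb_comm (idm P) _). reflexivity. }
  assert (Ia := icell_of_iso _ _ _ Cq (pb2_iso _ _ (iso_id P))).
  assert (Ib := icell_of_iso _ _ _ Cg (pb2_iso _ _ (iso_id P))).
  destruct (whr_ex p _ _ _ (proj2 Cq)) as [ma [Ma1 Ma2]].
  destruct (whr_ex f _ _ _ (proj2 Cg)) as [mb [Mb1 Mb2]].
  assert (HJ : mb = Jm f g (sid P)).
  { apply pb_ext. rw Mb1. rw (Jm1 f g (sid P)). auto. rw Mb2. rw (Jm2 f g (sid P)). auto. }
  exists (pb2 (sr (sid P)) (sl q)), (pb2 (sr (sid P)) (sl g)). split; [|split]; auto.
  exists ma, mb. split; [|split]; [split; auto|split; auto|].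
  subst mb. apply pb_ext.
  - rw Ma1. rw L2. auto.
  - rw Ma2. rw L3. auto.
Qed.

Lemma bipb_F {E : PBCat} (L : morclass E) {A B C P X : E} (p : Span A C) (f : Span B C)
  (q : Span P A) (g : Span P B) th (h h' : Span X P) i i' :
  is_bipb L p f q g th -> Lspan L h -> Lspan L h' -> phi_iso p f q g th h i -> phi_iso p f q g th h' i' ->
  ICiso p f (scomp q h) (scomp g h) i (scomp q h') (scomp g h') i' -> exists ga, icell h h' ga.
Proof.
  intros [_ [_ [_ Hbp]]] Lh Lh' Pi Pi' [al [be [[Ca [al' [Ca' [A1 A2]]]] [[Cb [be' [Cb' [B1 B2]]]] Hc]]]].
  destruct (Hbp X) as [FF _].
  assert (Hc' := compat_inv p f _ _ i _ _ i' al be al' be' Hc (proj2 Ca') (proj2 Cb') A1 A2 B1 B2).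
  destruct (FF h h' i i' al be Lh Lh' Pi Pi' Ca Cb Hc) as [ga [[Cga [Wq Wg]] _]].
  destruct (FF h' h i' i al' be' Lh' Lh Pi' Pi Ca' Cb' Hc') as [ga' [[Cga' [Wq' Wg']] _]].
  assert (Cid : forall (Y Z : E) (s : Span Y Z), cell s s (idm _)) by (intros; split; apply cmp_idr).
  assert (Uniq : forall (k : Span X P) ii, Lspan L k -> phi_iso p f q g th k ii ->
      forall x y : Hom (apex k) (apex k), cell k k x -> whr q k k x (idm _) -> whr g k k x (idm _) ->
      cell k k y -> whr q k k y (idm _) -> whr g k k y (idm _) -> x = y).
  { intros k ii Lk Pk x y Cx Qx Gx Cy Qy Gy.
    assert (Hcid : compat p f (scomp q k) (scomp g k) ii (scomp q k) (scomp g k) ii (idm _) (idm _)).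
    { exists (idm _), (idm _). split; [apply whr_id|split; [apply whr_id|]]. nrm. auto. }
    destruct (FF k k ii ii (idm _) (idm _) Lk Lk Pk Pk (Cid _ _ _) (Cid _ _ _) Hcid) as [z [_ Hz]].
    rewrite (Hz x), (Hz y); auto. }
  exists ga. split; auto. exists ga'. split; [auto|split].
  - apply (Uniq h i Lh Pi).
    + destruct Cga as [C1 C2]. destruct Cga' as [C1' C2']. split. rw C1. auto. rw C2. auto.
    + pose proof (whr_comp q h h' h ga ga' al al' Wq Wq') as W. rewrite A1 in W. exact W.
    + pose proof (whr_comp g h h' h ga ga' be be' Wg Wg') as W. rewrite B1 in W. exact W.
    + apply Cid.
    + apply whr_id.
    + apply whr_id.
  - apply (Uniq h' i' Lh' Pi').
    + destruct Cga as [C1 C2]. destruct Cga' as [C1' C2']. split. rw C1'. auto. rw C2'. auto.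
    + pose proof (whr_comp q h' h h' ga' ga al' al Wq' Wq) as W. rewrite A2 in W. exact W.
    + pose proof (whr_comp g h' h h' ga' ga be' be Wg' Wg) as W. rewrite B2 in W. exact W.
    + apply Cid.
    + apply whr_id.
    + apply whr_id.
Qed.


Definition cq {E : PBCat} {A B C Y : E} (p : Span A C) (f : Span B C) (y : Hom Y B)
  (eps : Hom (pb (sl f) y) (pb (sr p) (sr f))) : Span Y A :=
  mkSpan (pb (sl f) y) (pb2 (sl f) y) (sl p ∘ pb1 (sr p) (sr f) ∘ eps).
Definition cg {E : PBCat} {B Y : E} (y : Hom Y B) : Span Y B := mkSpan Y (idm Y) y.

Lemma swc {E : PBCat} {B F Y : E} (l : Hom F B) (y : Hom Y B) : l ∘ pb2 y l = y ∘ pb1 y l.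
Proof. symmetry. apply pb_comm. Qed.
Definition sw {E : PBCat} {B F Y : E} (l : Hom F B) (y : Hom Y B) : Hom (pb y l) (pb l y) :=
  pbl l y _ _ (swc l y).
Lemma sw1 {E : PBCat} {B F Y : E} (l : Hom F B) (y : Hom Y B) : pb1 l y ∘ sw l y = pb2 y l.
Proof. apply pbl1. Qed.
Lemma sw2 {E : PBCat} {B F Y : E} (l : Hom F B) (y : Hom Y B) : pb2 l y ∘ sw l y = pb1 y l.
Proof. apply pbl2. Qed.
Lemma swsw {E : PBCat} {B F Y : E} (l : Hom F B) (y : Hom Y B) : sw l y ∘ sw y l = idm _.
Proof.
  apply pb_ext.
  - rw (sw1 l y). rw (sw2 y l). auto.
  - rw (sw2 l y). rw (sw1 y l). auto.
Qed.

Lemma thc {E : PBCat} {A B C Y : E} (p : Span A C) (f : Span B C) (y : Hom Y B)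
  (eps : Hom (pb (sl f) y) (pb (sr p) (sr f))) :
  sr (cq p f y eps) ∘ sw (sl f) y = sl p ∘ (pb1 (sr p) (sr f) ∘ eps ∘ sw (sl f) y).
Proof. simpl. nrm. auto. Qed.
Definition cth {E : PBCat} {A B C Y : E} (p : Span A C) (f : Span B C) (y : Hom Y B)
  (eps : Hom (pb (sl f) y) (pb (sr p) (sr f))) :
  Hom (apex (scomp f (cg y))) (apex (scomp p (cq p f y eps))) :=
  pbl (sr (cq p f y eps)) (sl p) _ _ (thc p f y eps).
Lemma cth1 {E : PBCat} {A B C Y : E} (p : Span A C) (f : Span B C) (y : Hom Y B) eps :
  pb1 (sr (cq p f y eps)) (sl p) ∘ cth p f y eps = sw (sl f) y.
Proof. apply pbl1. Qed.
Lemma cth2 {E : PBCat} {A B C Y : E} (p : Span A C) (f : Span B C) (y : Hom Y B) eps :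
  pb2 (sr (cq p f y eps)) (sl p) ∘ cth p f y eps = pb1 (sr p) (sr f) ∘ eps ∘ sw (sl f) y.
Proof. apply pbl2. Qed.

Lemma cth_icell {E : PBCat} {A B C Y : E} (p : Span A C) (f : Span B C) (y : Hom Y B) eps :
  is_iso (sl p) -> pb2 (sr p) (sr f) ∘ eps = pb1 (sl f) y ->
  icell (scomp p (cq p f y eps)) (scomp f (cg y)) (cth p f y eps).
Proof.
  intros Is Hpi1.
  apply icell_of_iso.
  - split.
    + change (pb2 (sl f) y ∘ pb1 (sr (cq p f y eps)) (sl p) ∘ cth p f y eps = idm Y ∘ pb1 y (sl f)).
      rw (cth1 p f y eps). rw (sw2 (sl f) y). auto.
    + change (sr p ∘ pb2 (sr (cq p f y eps)) (sl p) ∘ cth p f y eps = sr f ∘ pb2 y (sl f)).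
      rw (cth2 p f y eps). rw (pb_comm (sr p) (sr f)). rw Hpi1. rw (sw1 (sl f) y). auto.
  - assert (Hc : y ∘ (pb2 (sl f) y ∘ pb1 (sr (cq p f y eps)) (sl p)) =
                 sl f ∘ (pb1 (sl f) y ∘ pb1 (sr (cq p f y eps)) (sl p))).
    { nrm. rewrite <- pb_comm. auto. }
    exists (pbl _ _ _ _ Hc). split.
    + apply pb_ext.
      * rw (pbl1 _ _ _ _ Hc). rw (cth1 p f y eps). rw (sw2 (sl f) y). auto.
      * rw (pbl2 _ _ _ _ Hc). rw (cth1 p f y eps). rw (sw1 (sl f) y). auto.
    + apply pb_ext.
      * rw (cth1 p f y eps). apply pb_ext.
        -- rw (sw1 (sl f) y). rw (pbl2 _ _ _ _ Hc). auto.
        -- rw (sw2 (sl f) y). rw (pbl1 _ _ _ _ Hc). auto.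
      * assert (K : sw (sl f) y ∘ pbl _ _ _ _ Hc = pb1 (sr (cq p f y eps)) (sl p)).
        { apply pb_ext.
          -- rw (sw1 (sl f) y). rw (pbl2 _ _ _ _ Hc). auto.
          -- rw (sw2 (sl f) y). rw (pbl1 _ _ _ _ Hc). auto. }
        rw (cth2 p f y eps). apply (iso_mono (sl p)); auto. nrm.
        change (sl p ∘ pb1 (sr p) (sr f) ∘ eps) with (sr (cq p f y eps)). rw K.
        apply pb_comm.
Qed.

Lemma cg_inv {E : PBCat} {X Y B : E} (y : Hom Y B) (h : Span X Y) :
  exists k : Hom (apex h) (apex (scomp (cg y) h)),
    pb1 (sr h) (sl (cg y)) ∘ k = idm _ /\ pb2 (sr h) (sl (cg y)) ∘ k = sr h /\
    k ∘ pb1 (sr h) (sl (cg y)) = idm _.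
Proof.
  assert (Hc : sr h ∘ idm (apex h) = sl (cg y) ∘ sr h) by (simpl; nrm; auto).
  exists (pbl _ _ _ _ Hc). split; [apply pbl1|split; [apply pbl2|]].
  apply pb_ext.
  - rw (pbl1 _ _ _ _ Hc). auto.
  - rw (pbl2 _ _ _ _ Hc). rewrite pb_comm. simpl. nrm. auto.
Qed.

Lemma cg_pb2 {E : PBCat} {X Y B : E} (y : Hom Y B) (h : Span X Y) :
  pb2 (sr h) (sl (cg y)) = sr h ∘ pb1 (sr h) (sl (cg y)).
Proof. rewrite pb_comm. simpl. nrm. auto. Qed.

Section Canon.
Context {E : PBCat} {A B C Y : E} (p : Span A C) (f : Span B C) (y : Hom Y B)
  (eps : Hom (pb (sl f) y) (pb (sr p) (sr f))).
Hypothesis Is : is_iso (sl p).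
Hypothesis Hpi : pi_value (sl f) (pb2 (sr p) (sr f)) y eps.
Local Notation q := (cq p f y eps).
Local Notation g := (cg y).
Local Notation th := (cth p f y eps).

Lemma canon_ff (X : E) (h h' : Span X Y) i i' al be :
  phi_iso p f q g th h i -> phi_iso p f q g th h' i' ->
  cell (scomp q h) (scomp q h') al -> cell (scomp g h) (scomp g h') be ->
  compat p f (scomp q h) (scomp g h) i (scomp q h') (scomp g h') i' al be ->
  exists ga : Hom (apex h') (apex h),
    (cell h h' ga /\ whr q h h' ga al /\ whr g h h' ga be) /\
    forall ga', (cell h h' ga' /\ whr q h h' ga' al /\ whr g h h' ga' be) -> ga' = ga.
Proof.
  intros Pi Pi' [Ca1 Ca2] [Cb1 Cb2] [ma [mb [[Ma1 Ma2] [[Mb1 Mb2] Hc]]]].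
  apply phi_LV in Pi. apply phi_LV in Pi'.
  destruct Pi as [Li1 [Li2 Li3]]. destruct Pi' as [Li1' [Li2' Li3']].
  destruct Hpi as [Hpi1 Hpi2].
  destruct (cg_inv y h') as [inv' [I1 [I2 I3]]].
  pose proof (cg_pb2 y h) as G2. pose proof (cg_pb2 y h') as G2'.
  assert (Hs : sr (scomp g h') ∘ (inv' ∘ pb1 (sr h') (sl q)) =
               sl f ∘ (pb1 (sl f) y ∘ pb2 (sr h') (sl q))).
  { change (sr (scomp g h')) with (y ∘ pb2 (sr h') (sl g)). nrm. rw I2.
    rw (pb_comm (sr h') (sl q)). change (sl q) with (pb2 (sl f) y).
    rw (eq_sym (pb_comm (sl f) y)). auto. }
  destruct (ispb_lift _ _ _ _ _ _ (pb_ok (sr (scomp g h')) (sl f)) Hs) as [sig [S1 S2]].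
  assert (Key1 : pb1 (sr (scomp q h')) (sl p) ∘ i' ∘ sig = idm _).
  { apply pb_ext.
    - rw Li1'. rw S1. rw I1. auto.
    - rw Li2'. rw (cth1 p f y eps). apply pb_ext.
      + rw (sw1 (sl f) y). rw (Jm2 f g h'). rw S2. auto.
      + rw (sw2 (sl f) y). rw (Jm1 f g h'). rw S1. rw I2. rw (pb_comm (sr h') (sl q)). auto. }
  assert (Hal : al = al ∘ (pb1 (sr (scomp q h')) (sl p) ∘ i' ∘ sig)) by (rewrite Key1; nrm; auto).
  assert (Key2 : pb1 (sr h) (sl q) ∘ al = pb1 (sr h) (sl g) ∘ be ∘ inv' ∘ pb1 (sr h') (sl q)).
  { rewrite Hal. rw (eq_sym Ma1). rw (eq_sym Hc). rw Li1. rw Mb1. rw S1. auto. }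
  assert (Key3 : pb2 (sr h) (sl q) ∘ al = sw (sl f) y ∘ Jm f g h ∘ mb ∘ sig).
  { rewrite Hal. rw (eq_sym Ma1). rw (eq_sym Hc). rw Li2. rw (cth1 p f y eps). auto. }
  assert (K3a : pb1 (sl f) y ∘ pb2 (sr h) (sl q) ∘ al = pb1 (sl f) y ∘ pb2 (sr h') (sl q)).
  { rw Key3. rw (sw1 (sl f) y). rw (Jm2 f g h). rw Mb2. rw S2. auto. }
  assert (K3b : pb2 (sl f) y ∘ pb2 (sr h) (sl q) ∘ al =
                sr h ∘ pb1 (sr h) (sl g) ∘ be ∘ inv' ∘ pb1 (sr h') (sl q)).
  { rw Key3. rw (sw2 (sl f) y). rw (Jm1 f g h). rw Mb1. rw S1. rw G2. auto. }
  set (z := y ∘ sr h').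
  assert (Hm0 : sl f ∘ pb1 (sl f) z = y ∘ (sr h' ∘ pb2 (sl f) z)).
  { rewrite pb_comm. unfold z. nrm. auto. }
  destruct (ispb_lift _ _ _ _ _ _ (pb_ok (sl f) y) Hm0) as [m0 [M01 M02]].
  assert (Hg : pb2 (sr p) (sr f) ∘ (eps ∘ m0) = pb1 (sl f) z) by (rw Hpi1; rw M01; auto).
  destruct (Hpi2 (apex h') z (eps ∘ m0) Hg) as [hh [[Hy Hm] Hu]].
  assert (E1 : sr h' = hh).
  { apply Hu. split. reflexivity. intros m [D1 D2]. f_equal. apply pb_ext.
    rw D1. rw M01. auto. rw D2. rw M02. auto. }
  assert (E2 : sr h ∘ pb1 (sr h) (sl g) ∘ be ∘ inv' = hh).
  { apply Hu. split.
    - unfold z. rw (eq_sym G2). change (y ∘ pb2 (sr h) (sl g) ∘ be = y ∘ pb2 (sr h') (sl g)) in Cb2.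
      rw Cb2. rw G2'. rw I1. auto.
    - intros m [D1 D2].
      assert (Ht : sr h' ∘ pb2 (sl f) z = sl q ∘ m0) by (symmetry; exact M02).
      destruct (ispb_lift _ _ _ _ _ _ (pb_ok (sr h') (sl q)) Ht) as [tau [T1 T2]].
      assert (Em : m = pb2 (sr h) (sl q) ∘ al ∘ tau).
      { apply pb_ext.
        - rewrite D1. rw K3a. rw T2. rw M01. auto.
        - rewrite D2. rw K3b. rw T1. auto. }
      apply pb_ext.
      + apply (iso_mono (sl p)); auto. nrm.
        change (sl p ∘ pb1 (sr p) (sr f) ∘ eps) with (sr q). rewrite Em. nrm.
        change (sr q ∘ pb2 (sr h) (sl q)) with (sr (scomp q h)). rw Ca2.
        change (sr (scomp q h')) with (sr q ∘ pb2 (sr h') (sl q)). rw T2. auto.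
      + rw Hpi1. rw D1. rw M01. auto. }
  assert (Hsr : sr h ∘ pb1 (sr h) (sl g) ∘ be ∘ inv' = sr h') by congruence.
  exists (pb1 (sr h) (sl g) ∘ be ∘ inv'). split; [split; [|split]|].
  - split.
    + change (sl h ∘ pb1 (sr h) (sl g) ∘ be = sl h' ∘ pb1 (sr h') (sl g)) in Cb1.
      rw Cb1. rw I1. auto.
    + nrm. exact Hsr.
  - split.
    + rw Key2. auto.
    + apply pb_ext.
      * rw K3a. auto.
      * rw K3b. rw Hsr. rw (pb_comm (sr h') (sl q)). auto.
  - split.
    + rw I3. auto.
    + rw G2. transitivity (sr h ∘ pb1 (sr h) (sl g) ∘ be ∘ inv' ∘ pb1 (sr h') (sl g)).
      * rw I3. auto.
      * rw Hsr. rw (eq_sym G2'). auto.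
  - intros ga' [_ [_ [W1 _]]].
    transitivity (ga' ∘ pb1 (sr h') (sl g) ∘ inv').
    + rw I1. auto.
    + rw (eq_sym W1). auto.
Qed.


Lemma canon_es (L : morclass E) (X : E) (a : Span X A) (b : Span X B) io : Lspan L b ->
  icell (scomp p a) (scomp f b) io ->
  exists (h : Span X Y) (i : Hom (apex (scomp f (scomp g h))) (apex (scomp p (scomp q h))))
         (al : Hom (apex a) (apex (scomp q h))) (be : Hom (apex b) (apex (scomp g h))),
    Lspan L h /\ phi_iso p f q g th h i /\
    icell (scomp q h) a al /\ icell (scomp g h) b be /\
    compat p f (scomp q h) (scomp g h) i a b io al be.
Proof.
  intros Lb [[Cio1 Cio2] [ioi [[Ci1 Ci2] [IO1 IO2]]]].
  pose proof Hpi as [Hpi1 Hpi2].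
  destruct (pb1_iso (sr a) (sl p) Is) as [ja [JA1 JA2]].
  assert (Hg : sr p ∘ (pb2 (sr a) (sl p) ∘ io ∘ sw (sr b) (sl f)) = sr f ∘ pb1 (sl f) (sr b)).
  { nrm. change (sr p ∘ pb2 (sr a) (sl p)) with (sr (scomp p a)). rw Cio2.
    change (sr (scomp f b)) with (sr f ∘ pb2 (sr b) (sl f)). rw (sw2 (sr b) (sl f)). auto. }
  destruct (ispb_lift _ _ _ _ _ _ (pb_ok (sr p) (sr f)) Hg) as [gm [GM1 GM2]].
  destruct (Hpi2 (apex b) (sr b) gm GM2) as [k2 [[Hy Hm] _]].
  assert (Hmd : sl f ∘ pb1 (sl f) (sr b) = y ∘ (k2 ∘ pb2 (sl f) (sr b))).
  { rewrite cmp_assoc, Hy. apply pb_comm. }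
  destruct (ispb_lift _ _ _ _ _ _ (pb_ok (sl f) y) Hmd) as [mD [MD1 MD2]].
  assert (EG : eps ∘ mD = gm) by (apply Hm; split; auto).
  exists (mkSpan (apex b) (sl b) k2).
  destruct (LV_ex p f q g th (mkSpan (apex b) (sl b) k2) (proj1 (proj1 (cth_icell p f y eps Is Hpi1))))
    as [i Li].
  exists i.
  assert (Hal : sr (mkSpan (apex b) (sl b) k2) ∘ (pb1 (sr b) (sl f) ∘ ioi ∘ ja) =
                sl q ∘ (mD ∘ sw (sl f) (sr b) ∘ ioi ∘ ja)).
  { simpl. nrm. rw MD2. rw (sw2 (sl f) (sr b)). auto. }
  destruct (ispb_lift _ _ _ _ _ _ (pb_ok _ _) Hal) as [al [AL1 AL2]].
  exists al.
  destruct (cg_inv y (mkSpan (apex b) (sl b) k2)) as [be [B1 [B2 B3]]].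
  exists be.
  assert (nid : ioi ∘ ja ∘ pb1 (sr a) (sl p) ∘ io = idm _) by (rw JA1; rw IO2; auto).
  assert (Hrh : sr b ∘ pb1 (sr (mkSpan (apex b) (sl b) k2)) (sl q) =
                sl f ∘ (pb1 (sl f) y ∘ pb2 (sr (mkSpan (apex b) (sl b) k2)) (sl q))).
  { rewrite <- Hy. nrm. rw (pb_comm (sr (mkSpan (apex b) (sl b) k2)) (sl q)).
    change (sl q) with (pb2 (sl f) y). rw (eq_sym (pb_comm (sl f) y)). auto. }
  destruct (ispb_lift _ _ _ _ _ _ (pb_ok _ _) Hrh) as [rho [RH1 RH2]].
  assert (Csr : sr (scomp q (mkSpan (apex b) (sl b) k2)) ∘ al = sr a).
  { change (sl p ∘ pb1 (sr p) (sr f) ∘ eps ∘ pb2 (sr (mkSpan (apex b) (sl b) k2)) (sl q) ∘ al = sr a).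
    rw AL2. rw EG. rw GM1. rw (swsw (sr b) (sl f)). rw IO1. rw (eq_sym (pb_comm (sr a) (sl p))). rw JA2. auto. }
  assert (Cgr : sr (scomp g (mkSpan (apex b) (sl b) k2)) ∘ be = sr b).
  { change (y ∘ pb2 (sr (mkSpan (apex b) (sl b) k2)) (sl g) ∘ be = sr b). rw B2. exact Hy. }
  split; [exact Lb|split; [|split; [|split]]].
  - apply LV_phi; auto. apply (proj1 (proj1 (cth_icell p f y eps Is Hpi1))).
  - apply icell_of_iso.
    + split; auto.
      change (sl b ∘ pb1 (sr (mkSpan (apex b) (sl b) k2)) (sl q) ∘ al = sl a).
      rw AL1. change (sl b ∘ pb1 (sr b) (sl f)) with (sl (scomp f b)). rw Ci1.
      change (sl (scomp p a)) with (sl a ∘ pb1 (sr a) (sl p)). rw JA2. auto.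
    + exists (pb1 (sr a) (sl p) ∘ io ∘ rho). split.
      * assert (K : rho ∘ al = ioi ∘ ja).
        { apply pb_ext.
          - rw RH1. rw AL1. auto.
          - rw RH2. rw AL2. rw MD1. rw (sw1 (sl f) (sr b)). auto. }
        rw K. rw IO1. rw JA2. auto.
      * apply pb_ext.
        -- rw AL1. rw nid. rw RH1. auto.
        -- rw AL2. rw nid. apply pb_ext.
           ++ rw MD1. rw (sw1 (sl f) (sr b)). rw RH2. auto.
           ++ rw MD2. rw (sw2 (sl f) (sr b)). rw RH1.
              rw (pb_comm (sr (mkSpan (apex b) (sl b) k2)) (sl q)). auto.
  - apply icell_of_iso.
    + split; auto.
      change (sl b ∘ pb1 (sr (mkSpan (apex b) (sl b) k2)) (sl g) ∘ be = sl b). rw B1. auto.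
    + exists (pb1 (sr (mkSpan (apex b) (sl b) k2)) (sl g)). split; auto.
  - destruct (whr_ex p (scomp q (mkSpan (apex b) (sl b) k2)) a al Csr) as [ma [Ma1 Ma2]].
    destruct (whr_ex f (scomp g (mkSpan (apex b) (sl b) k2)) b be Cgr) as [mb [Mb1 Mb2]].
    exists ma, mb. split; [split; auto|split; [split; auto|]].
    destruct Li as [Li1 [Li2 Li3]].
    assert (KD : sw (sl f) y ∘ Jm f g (mkSpan (apex b) (sl b) k2) ∘ mb = mD ∘ sw (sl f) (sr b)).
    { apply pb_ext.
      - rw (sw1 (sl f) y). rw (Jm2 f g (mkSpan (apex b) (sl b) k2)). rw Mb2. rw MD1. rw (sw1 (sl f) (sr b)). auto.
      - rw (sw2 (sl f) y). rw (Jm1 f g (mkSpan (apex b) (sl b) k2)). rw Mb1. rw B2.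
        rw MD2. rw (sw2 (sl f) (sr b)). auto. }
    apply pb_ext; [apply pb_ext|].
    + rw Li1. rw Mb1. rw B1. rw Ma1. rw AL1. rw nid. auto.
    + rw Li2. rw (cth1 p f y eps). rw KD. rw Ma1. rw AL2. rw nid. auto.
    + rw Li3. rw (cth2 p f y eps). rw KD. rw EG. rw GM1. rw (swsw (sr b) (sl f)). rw Ma2. auto.
Qed.

End Canon.


Lemma canon_bipb {E : PBCat} (L : morclass E) {A B C Y : E} (p : Span A C) (f : Span B C) (y : Hom Y B)
  (eps : Hom (pb (sl f) y) (pb (sr p) (sr f))) :
  protocal L -> L _ _ (sl f) -> is_iso (sl p) -> pi_value (sl f) (pb2 (sr p) (sr f)) y eps ->
  is_bipb L p f (cq p f y eps) (cg y) (cth p f y eps).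
Proof.
  intros HL Lf Is Hpi.
  split; [|split; [|split]].
  - apply (pc_pb2 L (sl f) y HL Lf).
  - apply (pc_iso L (idm Y) HL (iso_id Y)).
  - apply cth_icell; auto. apply Hpi.
  - intros X. split.
    + intros h h' i i' al be _ _ Pi Pi' Ca Cb Hc. apply (canon_ff p f y eps Is Hpi X h h' i i' al be); auto.
    + intros a b io La Lb Iio. apply (canon_es p f y eps Is Hpi L X a b io Lb Iio).
Qed.

Lemma bipb_clause {E : PBCat} (L R : morclass E) {A B C : E} (p : Span A C) (f : Span B C) :
  protocal L -> protocal R -> compatible L R -> Rstar R _ _ p -> Lspan L f ->
  (exists (P : E) (q : Span P A) (g : Span P B) (th : Hom (apex (scomp f g)) (apex (scomp p q))),
      is_bipb L p f q g th) /\
  (forall (P : E) (q : Span P A) (g : Span P B) (th : Hom (apex (scomp f g)) (apex (scomp p q))),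
      is_bipb L p f q g th -> Rstar R _ _ g).
Proof.
  intros HL HR [HC1 HC2] [Is Rr] Lf.
  assert (Rpi : R _ _ (pb2 (sr p) (sr f))) by (apply pc_pb2; auto).
  destruct (HC1 _ _ (sl f) Lf) as [Pw _].
  destruct (Pw _ (pb2 (sr p) (sr f))) as [Y [y [eps Hpi]]].
  assert (Ry : R _ _ y) by (apply (HC2 _ _ _ _ (sl f) (pb2 (sr p) (sr f)) y eps); auto).
  assert (Cb := canon_bipb L p f y eps HL Lf Is Hpi).
  split.
  { exists Y, (cq p f y eps), (cg y), (cth p f y eps). exact Cb. }
  intros P' q' g' th' Hb'.
  set (q := cq p f y eps) in *. set (g := cg y) in *. set (th := cth p f y eps) in *.
  pose proof Cb as [Lq [Lg [Ith Cbx]]].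
  pose proof Hb' as [Lq' [Lg' [Ith' Hbx]]].
  destruct (proj2 (Hbx Y) q g th Lq Lg Ith) as [h [ih [alh [beh [Lh [Ph [Iah [Ibh Hch]]]]]]]].
  assert (Oh : ICiso p f (scomp q' h) (scomp g' h) ih q g th) by (exists alh, beh; auto).
  destruct (proj2 (Cbx P') q' g' th' Lq' Lg' Ith') as [k [ik [alk [bek [Lk [Pk [Iak [Ibk Hck]]]]]]]].
  assert (Ok : ICiso p f (scomp q k) (scomp g k) ik q' g' th') by (exists alk, bek; auto).
  assert (cth_ : sl (scomp p q) ∘ th = sl (scomp f g)) by apply (proj1 (proj1 Ith)).
  assert (cth' : sl (scomp p q') ∘ th' = sl (scomp f g')) by apply (proj1 (proj1 Ith')).
  apply phi_LV in Ph. apply phi_LV in Pk.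
  (* step B : h . k ~ id *)
  destruct (LV_ex p f (scomp q' h) (scomp g' h) ih k (LV_cellL _ _ _ _ _ _ _ Ph)) as [j1 Lj1].
  destruct (LV_ex p f q' g' th' (scomp h k) cth') as [Ihk LIhk].
  destruct (LV_ex p f q' g' th' (sid P') cth') as [Iid LIid].
  assert (ChB : ICiso p f (scomp q' (scomp h k)) (scomp g' (scomp h k)) Ihk
                  (scomp q' (sid P')) (scomp g' (sid P')) Iid).
  { eapply ICiso_trans. apply ICiso_sym. apply (ICiso_assoc p f q' g' th' h k ih j1 Ihk); auto.
    eapply ICiso_trans. apply (ICiso_whisk p f _ _ ih q g th k j1 ik Oh Lj1 Pk).
    eapply ICiso_trans. exact Ok. apply ICiso_unit; auto. }
  assert (Lhk : Lspan L (scomp h k)).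
  { unfold Lspan. simpl. apply (pc_comp L); auto. apply (pc_pb1 L); auto. }
  assert (Lid' : Lspan L (sid P')) by (apply (pc_iso L); auto; apply iso_id).
  destruct (bipb_F L p f q' g' th' _ _ Ihk Iid Hb' Lhk Lid' (LV_phi _ _ _ _ _ _ _ cth' LIhk)
              (LV_phi _ _ _ _ _ _ _ cth' LIid) ChB) as [gaB IB].
  (* step A : k . h ~ id *)
  destruct (LV_ex p f (scomp q k) (scomp g k) ik h (LV_cellL _ _ _ _ _ _ _ Pk)) as [j3 Lj3].
  destruct (LV_ex p f q g th (scomp k h) cth_) as [Ikh LIkh].
  destruct (LV_ex p f q g th (sid Y) cth_) as [IidY LIidY].
  assert (ChA : ICiso p f (scomp q (scomp k h)) (scomp g (scomp k h)) Ikh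
                  (scomp q (sid Y)) (scomp g (sid Y)) IidY).
  { eapply ICiso_trans. apply ICiso_sym. apply (ICiso_assoc p f q g th k h ik j3 Ikh); auto.
    eapply ICiso_trans. apply (ICiso_whisk p f _ _ ik q' g' th' h j3 ih Ok Lj3 Ph).
    eapply ICiso_trans. exact Oh. apply ICiso_unit; auto. }
  assert (Lkh : Lspan L (scomp k h)).
  { unfold Lspan. simpl. apply (pc_comp L); auto. apply (pc_pb1 L); auto. }
  assert (LidY : Lspan L (sid Y)) by (apply (pc_iso L); auto; apply iso_id).
  destruct (bipb_F L p f q g th _ _ Ikh IidY Cb Lkh LidY (LV_phi _ _ _ _ _ _ _ cth_ LIkh)
              (LV_phi _ _ _ _ _ _ _ cth_ LIidY) ChA) as [gaA IA].
  destruct (equiv_legs k h gaB gaA IB IA) as [Ik1 Ik2].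
  destruct Ibk as [[Cb1 Cb2] [bei [_ [BE1 BE2]]]].
  assert (Ibe : is_iso bek) by (exists bei; auto).
  split.
  - rewrite <- Cb1. simpl. apply iso_comp; auto. apply iso_comp; auto. apply pb1_iso. apply iso_id.
  - rewrite <- Cb2. simpl. rewrite <- cmp_assoc. apply (pc_isol R); auto.
    apply iso_comp; auto. apply pb2_iso; auto.
Qed.


Theorem lemma4p3 (E : PBCat) (L R : morclass E) :
  protocal L -> protocal R -> compatible L R ->
  (forall (U V : E) (s : Span U V), Rstar R U V s -> Lspan L s) /\
  bprotocal L (Rstar R).
Proof.
  intros HL HR HC.
  assert (RL : forall (U V : E) (s : Span U V), Rstar R U V s -> Lspan L s).
  { intros U V s [Is _]. apply (pc_iso L); auto. }
  split; [exact RL|].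
  split; [exact RL|split; [|split; [|split; [|split]]]].
  - intros U V s [Ls [e' [a [b [Le' [Ia Ib]]]]]].
    destruct (equiv_legs s e' a b Ia Ib) as [I1 I2]. split; auto. apply (pc_iso R); auto.
  - intros U V s t f0 Ls Lt [Is Rs] [[C1 C2] [g0 [_ [G1 G2]]]].
    assert (If : is_iso f0) by (exists g0; auto).
    split.
    + rewrite <- C1. apply iso_comp; auto.
    + rewrite <- C2. apply (pc_isol R); auto.
  - intros U V W s t [Is Rs] [It Rt]. split.
    + simpl. apply iso_comp; auto. apply pb1_iso; auto.
    + simpl. apply (pc_comp R); auto. apply (pc_pb2 R); auto.
  - intros A B C p f Rp Lf. apply bipb_clause; auto.
  - intros A C p [Is _] U. apply gopfib_ok; auto.
Qed.
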